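(* Let $\mathcal H=\mathcal H_A\otimes\mathcal H_B$ be finite-dimensional with $d=\dim\mathcal H$. Let $H_A(t_i),H_B(t_i),H_A(t_f),H_B(t_f)$ be local Hamiltonians with spectral decompositions $H_X(t_i)=\sum_{l_X}E^i_{l_X}\Pi^i_{l_X}$, $H_X(t_f)=\sum_{k_X}E^f_{k_X}\Pi^f_{k_X}$ ($X=A,B$), let $\Phi$ be a CPTP map on $\mathcal H$ and $\beta>0$. Let $\gamma^X_{\beta,i}=e^{-\beta H_X(t_i)}/\mathcal Z^X_{\beta,i}$, $\gamma^X_{\beta,f}=e^{-\beta H_X(t_f)}/\mathcal Z^X_{\beta,f}$, $\gamma_{\beta,i}=\gamma^A_{\beta,i}\otimes\gamma^B_{\beta,i}$, $\gamma_{\beta,f}=\gamma^A_{\beta,f}\otimes\gamma^B_{\beta,f}$, and $\Delta F=-\beta^{-1}\ln\big(\mathcal Z^A_{\beta,f}\mathcal Z^B_{\beta,f}/(\mathcal Z^A_{\beta,i}\mathcal Z^B_{\beta,i})\big)$. Suppose the initial state is $\rho_i=\gamma^A_{\beta,i}\otimes\gamma^B_{\beta,i}+\mathfrak E_{AB}$ with $\mathfrak E_{AB}$ a Hermitian operator satisfying $\mathrm{Tr}_A\mathfrak E_{AB}=\mathrm{Tr}_B\mathfrak E_{AB}=0$. Then the bipartite EPM average satisfies $$\big\langle e^{-\beta(\Delta E-\Delta F)}\big\rangle=\Big\{d+\mathrm{Tr}\big(\gamma_{\beta,i}^{-1}\mathfrak E_{AB}\big)\Big\}\Big\{\mathrm{Tr}\big(\gamma_{\beta,f}\Phi[\gamma_{\beta,i}]\big)+\mathrm{Tr}\big(\gamma_{\beta,f}\Phi[\mathfrak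 E_{AB}]\big)\Big\}.$$
   Context: Bipartite EPM statistics: with $\mathbf l=(l_A,l_B)$, $\mathbf k=(k_A,k_B)$, the joint distribution is $p^{\mathbf l,\mathbf k}=\mathrm{Tr}(\rho_i\,\Pi^i_{l_A}\otimes\Pi^i_{l_B})\,\mathrm{Tr}(\Phi[\rho_i]\,\Pi^f_{k_A}\otimes\Pi^f_{k_B})$, the energy change is $\Delta E_{\mathbf l,\mathbf k}=E^f_{k_A}+E^f_{k_B}-E^i_{l_A}-E^i_{l_B}$, and $\langle g(\Delta E)\rangle=\sum_{\mathbf l,\mathbf k}p^{\mathbf l,\mathbf k}g(\Delta E_{\mathbf l,\mathbf k})$. $\Phi$ is extended linearly to non-positive operators. *)

(* Defs.v *)
From HB Require Import structures.
From mathcomp Require Import all_boot all_order all_algebra.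
From mathcomp Require Import reals.
From mathcomp Require Import sequences exp.
From mathcomp Require Import complex mxtens.
Set Implicit Arguments.
Unset Strict Implicit.
Unset Printing Implicit Defensive.
Import Order.TTheory GRing.Theory Num.Theory.
Local Open Scope ring_scope.

Section QDefs.
Variable R : realType.
Local Notation C := R[i].

Definition toC (x : R) : C := (x%:C)%C.

Definition selfadjoint (m : nat) (A : 'M[C]_m) : Prop :=
  map_mx Num.conj (A^T) = A.

Definition psd (m : nat) (A : 'M[C]_m) : Prop :=
  selfadjoint A /\
  forall v : 'rV[C]_m, 0 <= (v *m A *m (map_mx Num.conj v)^T) 0 0.

Definition density (m : nat) (A : 'M[C]_m) : Prop := psd A /\ \tr A = 1.

Record spectral_decomp (m p : nat) (H : 'M[C]_m)
    (E : 'I_p -> R) (P : 'I_p -> 'M[C]_m) : Prop := {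
  sd_inj : injective E;
  sd_herm : forall l, selfadjoint (P l);
  sd_orth : forall l l', P l *m P l' = if l == l' then P l else 0;
  sd_nz : forall l, P l != 0;
  sd_sum : \sum_l P l = 1%:M;
  sd_eq : H = \sum_l toC (E l) *: P l }.

(* functional calculus: e^{-beta H} = sum_l e^{-beta E_l} Pi_l *)
Definition expmx_spec (m p : nat) (beta : R) (E : 'I_p -> R)
    (P : 'I_p -> 'M[C]_m) : 'M[C]_m :=
  \sum_l toC (expR (- (beta * E l))) *: P l.

Definition partZ (m p : nat) (beta : R) (E : 'I_p -> R)
    (P : 'I_p -> 'M[C]_m) : R :=
  complex.Re (\tr (expmx_spec beta E P)).

Definition gibbs (m p : nat) (beta : R) (E : 'I_p -> R)
    (P : 'I_p -> 'M[C]_m) : 'M[C]_m :=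
  toC ((partZ beta E P)^-1) *: expmx_spec beta E P.

Definition ptraceA (m n : nat) (X : 'M[C]_(m * n)) : 'M[C]_n :=
  \matrix_(j, l) \sum_(i < m) X (mxtens_index (i, j)) (mxtens_index (i, l)).
Definition ptraceB (m n : nat) (X : 'M[C]_(m * n)) : 'M[C]_m :=
  \matrix_(i, k) \sum_(j < n) X (mxtens_index (i, j)) (mxtens_index (k, j)).

(* ampliation id_k (x) Phi acting on 'M_(k * d) *)
Definition ampl (k d : nat) (Phi : 'M[C]_d -> 'M[C]_d) (X : 'M[C]_(k * d))
  : 'M[C]_(k * d) :=
  \matrix_(r, s)
    Phi (\matrix_(a, b) X (mxtens_index ((mxtens_unindex r).1, a))
                          (mxtens_index ((mxtens_unindex s).1, b)))
        (mxtens_unindex r).2 (mxtens_unindex s).2.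

Definition completely_positive (d : nat) (Phi : 'M[C]_d -> 'M[C]_d) : Prop :=
  forall (k : nat) (X : 'M[C]_(k * d)), psd X -> psd (ampl Phi X).

Definition trace_preserving (d : nat) (Phi : 'M[C]_d -> 'M[C]_d) : Prop :=
  forall X, \tr (Phi X) = \tr X.

Definition CPTP (d : nat) (Phi : {linear 'M[C]_d -> 'M[C]_d}) : Prop :=
  completely_positive Phi /\ trace_preserving Phi.

Definition epm_avg (m n pAi pBi pAf pBf : nat)
    (EAi : 'I_pAi -> R) (PAi : 'I_pAi -> 'M[C]_m)
    (EBi : 'I_pBi -> R) (PBi : 'I_pBi -> 'M[C]_n)
    (EAf : 'I_pAf -> R) (PAf : 'I_pAf -> 'M[C]_m)
    (EBf : 'I_pBf -> R) (PBf : 'I_pBf -> 'M[C]_n)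
    (Phi : 'M[C]_(m * n) -> 'M[C]_(m * n)) (rho : 'M[C]_(m * n))
    (g : R -> R) : C :=
  \sum_(lA < pAi) \sum_(lB < pBi) \sum_(kA < pAf) \sum_(kB < pBf)
     (\tr (rho *m (PAi lA *t PBi lB)) *
      \tr (Phi rho *m (PAf kA *t PBf kB)) *
      toC (g (EAf kA + EBf kB - EAi lA - EBi lB))).

End QDefs.

(* Main.v *)
Require Import Defs.
From HB Require Import structures.
From mathcomp Require Import all_boot all_order all_algebra.
From mathcomp Require Import reals.
From mathcomp Require Import sequences exp.
From mathcomp Require Import complex mxtens.
From mathcomp Require Import ring.
Import Order.TTheory GRing.Theory Num.Theory.
Local Open Scope ring_scope.

Section Helpers.
Variable R : realType.
Local Notation C := R[i].

Lemma tensmxDl {m n p q} (A1 A2 : 'M[C]_(m,n)) (B : 'M[C]_(p,q)) :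
  (A1 + A2) *t B = A1 *t B + A2 *t B.
Proof.
apply/matrixP=> i j.
case: (mxtens_indexP i) => i1 i2; case: (mxtens_indexP j) => j1 j2.
by rewrite ?[RHS]mxE !tensmxE !mxE mulrDl.
Qed.

Lemma tensmxDr {m n p q} (A : 'M[C]_(m,n)) (B1 B2 : 'M[C]_(p,q)) :
  A *t (B1 + B2) = A *t B1 + A *t B2.
Proof.
apply/matrixP=> i j.
case: (mxtens_indexP i) => i1 i2; case: (mxtens_indexP j) => j1 j2.
by rewrite ?[RHS]mxE !tensmxE !mxE mulrDr.
Qed.

Lemma tensmxZl {m n p q} c (A : 'M[C]_(m,n)) (B : 'M[C]_(p,q)) :
  (c *: A) *t B = c *: (A *t B).
Proof.
apply/matrixP=> i j.
case: (mxtens_indexP i) => i1 i2; case: (mxtens_indexP j) => j1 j2.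
by rewrite ?[RHS]mxE !tensmxE !mxE mulrA.
Qed.

Lemma tensmxZr {m n p q} c (A : 'M[C]_(m,n)) (B : 'M[C]_(p,q)) :
  A *t (c *: B) = c *: (A *t B).
Proof.
apply/matrixP=> i j.
case: (mxtens_indexP i) => i1 i2; case: (mxtens_indexP j) => j1 j2.
by rewrite ?[RHS]mxE !tensmxE !mxE mulrCA.
Qed.

Lemma tensmx_sums m n (I J : finType) (a : I -> C) (b : J -> C)
   (A : I -> 'M[C]_m) (B : J -> 'M[C]_n) :
  (\sum_i a i *: A i) *t (\sum_j b j *: B j)
  = \sum_i \sum_j (a i * b j) *: (A i *t B j).
Proof.
rewrite (big_morph (fun X => X *t (\sum_j b j *: B j)) (fun X Y => tensmxDl X Y _) (tens0mx _)).
apply: eq_bigr => i _.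
rewrite tensmxZl (big_morph (fun Y => A i *t Y) (tensmxDr _) (tensmx0 _)).
rewrite scaler_sumr; apply: eq_bigr => j _.
by rewrite tensmxZr scalerA.
Qed.

Lemma sd_mul m p (H : 'M[C]_m) E (P : 'I_p -> 'M[C]_m) (a b : 'I_p -> C) :
  spectral_decomp H E P ->
  (\sum_l a l *: P l) *m (\sum_l b l *: P l) = \sum_l (a l * b l) *: P l.
Proof.
move=> sd; rewrite mulmx_suml; apply: eq_bigr => l _.
rewrite mulmx_sumr (bigD1 l) //= big1 ?addr0.
  by rewrite -scalemxAl -scalemxAr (sd_orth sd) eqxx scalerA mulrC.
move=> k /negbTE kl; rewrite -scalemxAl -scalemxAr (sd_orth sd).
by rewrite eq_sym kl !scaler0.
Qed.

Lemma trP_gt0 m p (H : 'M[C]_m) E (P : 'I_p -> 'M[C]_m) l :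
  spectral_decomp H E P -> 0 < \tr (P l).
Proof.
move=> sd.
have PP : P l *m P l = P l by rewrite (sd_orth sd) eqxx.
have herm : forall i j, P l j i = (P l i j)^*.
  move=> i j; have := sd_herm sd l; move/matrixP/(_ i j).
  by rewrite !mxE => <-; rewrite conjCK.
case: (pickP (fun ij : 'I_m * 'I_m => P l ij.1 ij.2 != 0)) => [[i j] /= nz | H0]; last first.
  exfalso; have := sd_nz sd l; apply/negP; rewrite negbK; apply/eqP/matrixP => i j.
  by have := H0 (i, j); rewrite /= mxE => /negbFE/eqP.
rewrite -PP /mxtrace.
have ge0 : forall i j, 0 <= P l i j * P l j i by move=> i' j'; rewrite (herm i' j') mul_conjC_ge0.
rewrite (bigD1 i) //= ltr_wpDr //; first by apply: sumr_ge0 => k _; rewrite mxE; apply: sumr_ge0 => ? _.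
rewrite mxE (bigD1 j) //= ltr_wpDr //; first by apply: sumr_ge0.
by rewrite (herm i j) mul_conjC_gt0.
Qed.

Lemma toC_gt0 (x : R) : 0 < x -> 0 < toC x.
Proof. by move=> x0; rewrite ltcE /= eqxx x0. Qed.

Lemma partZ_gt0 m p (H : 'M[C]_m) E (P : 'I_p -> 'M[C]_m) beta :
  spectral_decomp H E P -> (0 < p)%N -> 0 < partZ beta E P.
Proof.
move=> sd p0; rewrite /partZ /expmx_spec.
set x := \tr _.
suff : 0 < x by rewrite ltcE => /andP[_].
rewrite /x linear_sum (bigD1 (Ordinal p0)) //= ltr_wpDr //.
  by apply: sumr_ge0 => l _; rewrite mxtraceZ ltW // mulr_gt0 ?toC_gt0 ?expR_gt0 // (@trP_gt0 _ _ _ _ _ _ sd).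
by rewrite mxtraceZ mulr_gt0 ?toC_gt0 ?expR_gt0 // (@trP_gt0 _ _ _ _ _ _ sd).
Qed.

Lemma p_gt0 m p (H : 'M[C]_m) E (P : 'I_p -> 'M[C]_m) :
  spectral_decomp H E P -> (0 < m)%N -> (0 < p)%N.
Proof.
move=> sd; case: m H P sd => // m H P sd _.
case: p E P sd => // E P sd.
have := sd_sum sd; rewrite big_ord0 => /matrixP/(_ ord0 ord0).
by rewrite !mxE eqxx /= => /eqP; rewrite eq_sym oner_eq0.
Qed.

Lemma tr_dim0 k (A : 'M[C]_k) : k = 0%N -> \tr A = 0.
Proof. by case: k A => // A _; rewrite /mxtrace big_ord0. Qed.

Lemma toCM (x y : R) : toC (x * y) = toC x * toC y.
Proof. by rewrite /toC rmorphM. Qed.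

Lemma gibbsE m p (E : 'I_p -> R) (P : 'I_p -> 'M[C]_m) beta :
  gibbs beta E P = \sum_l toC (expR (- (beta * E l)) / partZ beta E P) *: P l.
Proof.
rewrite /gibbs /expmx_spec scaler_sumr; apply: eq_bigr => l _.
by rewrite scalerA -toCM mulrC.
Qed.

Lemma gibbs_inv m p (H : 'M[C]_m) E (P : 'I_p -> 'M[C]_m) beta :
  spectral_decomp H E P -> (0 < p)%N ->
  gibbs beta E P *m (\sum_l toC (partZ beta E P * expR (beta * E l)) *: P l) = 1%:M.
Proof.
move=> sd p0; have Z0 := @partZ_gt0 _ _ _ _ _ beta sd p0.
rewrite gibbsE (@sd_mul _ _ _ _ _ _ _ sd) -(sd_sum sd); apply: eq_bigr => l _.
rewrite -toCM expRN.
have e0 : expR (beta * E l) != 0 by rewrite gt_eqF ?expR_gt0.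
rewrite [X in toC X](_ : _ = 1) ?scale1r //.
by field; rewrite e0 gt_eqF.
Qed.

Lemma tens11 m n : (1%:M : 'M[C]_m) *t (1%:M : 'M[C]_n) = 1%:M.
Proof.
apply/matrixP => i j.
case: (mxtens_indexP i) => i1 i2; case: (mxtens_indexP j) => j1 j2.
rewrite tensmxE !mxE (can_eq (@mxtens_indexK _ _)) xpair_eqE.
by case: (i1 == j1); case: (i2 == j2); rewrite /= ?mulr1 ?mulr0 ?mul0r.
Qed.
End Helpers.
Arguments gibbs_inv {R m p H E P} beta.
Arguments p_gt0 {R m p H E P}.
Arguments partZ_gt0 {R m p H E P} beta.
Arguments tr_dim0 {R k A}.
Arguments gibbsE {R m p} E P beta.

Theorem mainTheorem5 (R : realType) (m n pAi pBi pAf pBf : nat)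
    (HAi : 'M[R[i]]_m) (EAi : 'I_pAi -> R) (PAi : 'I_pAi -> 'M[R[i]]_m)
    (HBi : 'M[R[i]]_n) (EBi : 'I_pBi -> R) (PBi : 'I_pBi -> 'M[R[i]]_n)
    (HAf : 'M[R[i]]_m) (EAf : 'I_pAf -> R) (PAf : 'I_pAf -> 'M[R[i]]_m)
    (HBf : 'M[R[i]]_n) (EBf : 'I_pBf -> R) (PBf : 'I_pBf -> 'M[R[i]]_n)
    (Phi : {linear 'M[R[i]]_(m * n) -> 'M[R[i]]_(m * n)})
    (beta : R) (EAB rho_i : 'M[R[i]]_(m * n)) :
  spectral_decomp HAi EAi PAi -> spectral_decomp HBi EBi PBi ->
  spectral_decomp HAf EAf PAf -> spectral_decomp HBf EBf PBf ->
  CPTP Phi -> 0 < beta ->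
  selfadjoint EAB -> ptraceA EAB = 0 -> ptraceB EAB = 0 ->
  rho_i = gibbs beta EAi PAi *t gibbs beta EBi PBi + EAB ->
  density rho_i ->
  let gamma_i := gibbs beta EAi PAi *t gibbs beta EBi PBi in
  let gamma_f := gibbs beta EAf PAf *t gibbs beta EBf PBf in
  let DeltaF := - beta^-1 * ln ((partZ beta EAf PAf * partZ beta EBf PBf)
                               / (partZ beta EAi PAi * partZ beta EBi PBi)) in
  epm_avg EAi PAi EBi PBi EAf PAf EBf PBf Phi rho_i
      (fun DE => expR (- (beta * (DE - DeltaF))))
  = ((m * n)%:R + \tr (invmx gamma_i *m EAB))
    * (\tr (gamma_f *m Phi gamma_i) + \tr (gamma_f *m Phi EAB)).
Proof.
move=> sAi sBi sAf sBf _ b0 _ _ _ rhoE dens gi gf DF.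
have mn0 : (0 < m * n)%N.
  case: (posnP (m * n)) => [h|//]; have := dens.2.
  by rewrite (tr_dim0 h) => /eqP; rewrite eq_sym oner_eq0.
move: mn0; rewrite muln_gt0 => /andP[m0 n0].
have ZAi := partZ_gt0 beta sAi (p_gt0 sAi m0).
have ZBi := partZ_gt0 beta sBi (p_gt0 sBi n0).
have ZAf := partZ_gt0 beta sAf (p_gt0 sAf m0).
have ZBf := partZ_gt0 beta sBf (p_gt0 sBf n0).
set zAi := partZ beta EAi PAi in ZAi DF *.
set zBi := partZ beta EBi PBi in ZBi DF *.
set zAf := partZ beta EAf PAf in ZAf DF *.
set zBf := partZ beta EBf PBf in ZBf DF *.
have gE : forall a b c d, toC (expR (- (beta * ((a + b - c - d) - DF)))) =
   toC (zAi * expR (beta * c)) * toC (zBi * expR (beta * d)) *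
   (toC (expR (- (beta * a)) / zAf) * toC (expR (- (beta * b)) / zBf)).
  move=> a b c d; rewrite -!toCM; congr toC.
  have q0 : 0 < zAf * zBf / (zAi * zBi) by rewrite !(mulr_gt0, invr_gt0).
  have -> : - (beta * (a + b - c - d - DF)) =
     - (beta * a) + - (beta * b) + beta * c + beta * d + - ln (zAf * zBf / (zAi * zBi)).
    by rewrite /DF; field; rewrite gt_eqF.
  rewrite !expRD [expR (- ln _)]expRN lnK //.
  field; rewrite !gt_eqF //.
rewrite /epm_avg.
under eq_bigr => lA _ do under eq_bigr => lB _ do under eq_bigr => kA _ do
  under eq_bigr => kB _ do rewrite gE.
set cA := fun lA => toC (zAi * expR (beta * EAi lA)).
set cB := fun lB => toC (zBi * expR (beta * EBi lB)).
set dA := fun kA => toC (expR (- (beta * EAf kA)) / zAf).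
set dB := fun kB => toC (expR (- (beta * EBf kB)) / zBf).
set GA := \sum_l cA l *: PAi l.
set GB := \sum_l cB l *: PBi l.
have [giU invE] : gi \in unitmx /\ invmx gi = GA *t GB.
  have h : gi *m (GA *t GB) = 1%:M.
    by rewrite /gi tensmx_mul (gibbs_inv beta sAi) ?(gibbs_inv beta sBi) ?tens11 // (p_gt0 sAi, p_gt0 sBi).
  have [u _] := mulmx1_unit h.
  split=> //; by rewrite -[RHS]mul1mx -(mulVmx u) -mulmxA h mulmx1.
have gfE : gf = (\sum_l dA l *: PAf l) *t (\sum_l dB l *: PBf l) by rewrite /gf !gibbsE.
have X1 : \sum_lA \sum_lB \tr (rho_i *m (PAi lA *t PBi lB)) * (cA lA * cB lB)
   = (m * n)%:R + \tr (invmx gi *m EAB).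
  have -> : \sum_lA \sum_lB \tr (rho_i *m (PAi lA *t PBi lB)) * (cA lA * cB lB)
      = \tr (rho_i *m invmx gi).
    rewrite invE /GA /GB tensmx_sums mulmx_sumr linear_sum; apply: eq_bigr => lA _.
    rewrite mulmx_sumr linear_sum; apply: eq_bigr => lB _.
    by rewrite /= -scalemxAr mxtraceZ mulrC.
  by rewrite mxtrace_mulC rhoE mulmxDr mxtraceD mulVmx // mxtrace1.
have X2 : \sum_kA \sum_kB \tr (Phi rho_i *m (PAf kA *t PBf kB)) * (dA kA * dB kB)
   = \tr (gf *m Phi gi) + \tr (gf *m Phi EAB).
  have -> : \sum_kA \sum_kB \tr (Phi rho_i *m (PAf kA *t PBf kB)) * (dA kA * dB kB)
      = \tr (Phi rho_i *m gf).
    rewrite gfE tensmx_sums mulmx_sumr linear_sum; apply: eq_bigr => kA _.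
    rewrite mulmx_sumr linear_sum; apply: eq_bigr => kB _.
    by rewrite /= -scalemxAr mxtraceZ mulrC.
  by rewrite mxtrace_mulC rhoE linearD mulmxDr mxtraceD.
rewrite -X1 -X2 big_distrl; apply: eq_bigr => lA _.
rewrite big_distrl; apply: eq_bigr => lB _.
rewrite big_distrr; apply: eq_bigr => kA _.
rewrite big_distrr; apply: eq_bigr => kB _.
rewrite /cA /cB /dA /dB /=; ring.
Qed.
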